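(* For every integer $m\ge0$ and every integer $l>1$, \[ \mu_l^{(1,m+2)}=2P_{l-1}^{\{-2,-1,m\}} . \]
   Context: An $n$-board is the strip $[0,n]\times[0,1]$ divided into unit cells, each split into a left and a right half (slot). A $(w,g;t)$-comb is a tile consisting of a row of $t$ rectangles (teeth) of size $w\times1$, consecutive teeth separated by a gap of width $g$; gaps are not part of the tile and may be occupied by other tiles. (A $(\frac12,\frac12;1)$-comb is a half-square $\frac12\times1$.) A tiling is a placement of translated (unrotated) combs whose teeth cover the board exactly without overlap. Given a tiling of an $n$-board, an integer $x$ with $0<x<n$ is a cut point if every comb has all of its teeth in $[0,x]$ or all in $[x,n]$. A metatile of length $l$ is a tiling of an $l$-board with no cut point. A metatile is mixed if it contains combs of more than one type. For integers $1\le m_1<m_2$, $\mu_l^{(m_1,m_2)}$ is the number of mixed metatiles of length $l$ when tiling with $(\frac12,\frac12;m_1)$- and $(\frac12,\frac12;m_2)$-combs. For a finite set $W$ of integers, $P_n^W$ is the number of permutations $\pi$ of $\{1,\dots,n\}$ with $\pi(i)-i\in W$ for all $i$ (equivalently, the permanent of the $n\times n$ $(0,1)$ matrix whose $(i,j)$ entry is $1$ iff $j-i\in W$), with $P_0^W=1$. *)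

(* Defs.v *)
From mathcomp Require Import all_boot all_order all_algebra all_fingroup.
Unset Printing Implicit Defensive.

(* Board of length n: 2n slots (half-cells) numbered 0 .. 2n-1; slot j is the
   interval [j/2, (j+1)/2].  A (1/2,1/2;t)-comb placed with its leftmost tooth on
   slot s has teeth on slots s, s+2, ..., s+2(t-1).
   A placement is a pair (b, s) with b : bool the comb type (false -> m1-comb,
   true -> m2-comb) and s the slot of the leftmost tooth. *)

Definition ctype (m1 m2 : nat) (b : bool) : nat := if b then m2 else m1.

Definition teeth (m1 m2 : nat) (b : bool) (s : nat) : seq nat :=
  [seq s + k.*2 | k <- iota 0 (ctype m1 m2 b)].

Definition is_tiling (m1 m2 n : nat) (T : {set bool * 'I_(n.*2)}) : bool :=
  [forall p in T, all (fun j => j < n.*2) (teeth m1 m2 p.1 p.2)] &&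
  [forall j : 'I_(n.*2),
     #|[set p in T | (j : nat) \in teeth m1 m2 p.1 p.2]| == 1].

Definition is_cut_point (m1 m2 n : nat) (T : {set bool * 'I_(n.*2)}) (x : nat) : bool :=
  [forall p in T, all (fun j => j < x.*2) (teeth m1 m2 p.1 p.2)
               || all (fun j => x.*2 <= j) (teeth m1 m2 p.1 p.2)].

Definition is_metatile (m1 m2 l : nat) (T : {set bool * 'I_(l.*2)}) : bool :=
  is_tiling m1 m2 l T &&
  [forall x : 'I_l, (0 < x) ==> ~~ is_cut_point m1 m2 l T x].

Definition is_mixed (l : nat) (T : {set bool * 'I_(l.*2)}) : bool :=
  [exists p in T, ~~ p.1] && [exists p in T, p.1].

Definition mu (m1 m2 l : nat) : nat :=
  #|[set T : {set bool * 'I_(l.*2)} | is_metatile m1 m2 l T && is_mixed l T]|.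

Definition P (W : seq int) (n : nat) : nat :=
  #|[set s : 'S_n | [forall i : 'I_n, ((s i)%:Z - (i : nat)%:Z)%R \in W]]|.

(* Main.v *)
Require Import Defs.
From mathcomp Require Import all_boot all_order all_algebra all_fingroup.
From mathcomp Require Import zify.

Fixpoint cnt (f : nat -> bool) (lo hi : nat) : nat :=
  if hi is h.+1 then cnt f lo h + ((lo <= h) && f h) else 0.

Lemma cnt0 (f : nat -> bool) lo hi : hi <= lo -> cnt f lo hi = 0.
Proof.
elim: hi => [|h IH] //= H; rewrite IH; last lia.
have -> : (lo <= h) = false by lia. by [].
Qed.

Lemma cntD f lo mid hi : lo <= mid -> mid <= hi -> cnt f lo hi = cnt f lo mid + cnt f mid hi.
Proof.
move=> H1; elim: hi => [|h IH] H2.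
  have -> : mid = 0 by lia. by rewrite addn0.
case: (ltnP h mid) => H3.
  have E : mid = h.+1 by lia. rewrite E (@cnt0 f h.+1 h.+1 (leqnn _)) addn0. by [].
rewrite /= IH // H3 /=. have -> : (lo <= h) = true by lia. by rewrite addnA.
Qed.

Lemma cnt1 (f : nat -> bool) x : cnt f x x.+1 = f x.
Proof. by rewrite /= cnt0 // leqnn. Qed.

Lemma cnt_ext (f : nat -> bool) g lo hi : (forall x, lo <= x < hi -> f x = g x) -> cnt f lo hi = cnt g lo hi.
Proof.
elim: hi => [|h IH] //= H. rewrite IH; last by move=> x Hx; apply: H; lia.
case: (leqP lo h) => H1 //=. rewrite H //; lia.
Qed.

Lemma cnt_le (f : nat -> bool) lo hi : cnt f lo hi <= hi - lo.
Proof.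
elim: hi => [|h IH] //=. case: (leqP lo h) => H1 /=; case: (f h) => /=; lia.
Qed.

Lemma cnt_mono (f : nat -> bool) lo lo' hi hi' : lo' <= lo -> hi <= hi' -> cnt f lo hi <= cnt f lo' hi'.
Proof.
move=> H1 H2. case: (leqP lo hi) => H3; last by rewrite cnt0 //; lia.
rewrite (@cntD f lo' lo hi') //; last lia.
rewrite (@cntD f lo hi hi') //; lia.
Qed.

Lemma cnt_pt (f : nat -> bool) lo hi x : lo <= x -> x < hi -> f x -> cnt f lo hi = cnt f lo x + 1 + cnt f x.+1 hi.
Proof.
move=> H1 H2 Hx. rewrite (@cntD f lo x hi) //; last lia.
rewrite (@cntD f x x.+1 hi) // cnt1 Hx. lia.
Qed.

Lemma cnt_ex (f : nat -> bool) lo hi : 0 < cnt f lo hi -> exists x, lo <= x < hi /\ f x.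
Proof.
elim: hi => [|h IH] //=. case: (leqP lo h) => H1 /=; case Hf: (f h) => /=; rewrite ?addn0 ?addn1.
- move=> _; exists h; split => //; lia.
- move=> /IH [x [Hx Hfx]]; exists x; split => //; lia.
- move=> /IH [x [Hx Hfx]]; exists x; split => //; lia.
- move=> /IH [x [Hx Hfx]]; exists x; split => //; lia.
Qed.

Lemma cnt_ex2 (f : nat -> bool) lo hi : 1 < cnt f lo hi -> exists a b, [/\ lo <= a, a < b, b < hi, f a & f b].
Proof.
elim: hi => [|h IH] //=. case: (leqP lo h) => H1 /=; case Hf: (f h) => /=; rewrite ?addn0 ?addn1.
- move=> H. have /cnt_ex [x [Hx Hfx]] : 0 < cnt f lo h by lia.
  exists x, h; split => //; lia.
- move=> /IH [a [b [? ? ? ? ?]]]; exists a, b; split => //; lia.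
- move=> /IH [a [b [? ? ? ? ?]]]; exists a, b; split => //; lia.
- move=> /IH [a [b [? ? ? ? ?]]]; exists a, b; split => //; lia.
Qed.

Lemma cnt_ex3 (f : nat -> bool) lo hi : 2 < cnt f lo hi ->
  exists a b c, [/\ lo <= a, a < b, b < c, c < hi & [/\ f a, f b & f c]].
Proof.
elim: hi => [|h IH] //=. case: (leqP lo h) => H1 /=; case Hf: (f h) => /=; rewrite ?addn0 ?addn1.
- move=> H. have /cnt_ex2 [a [b [? ? ? ? ?]]] : 1 < cnt f lo h by lia.
  exists a, b, h; split => //; lia.
- move=> /IH [a [b [c [? ? ? ? ?]]]]; exists a, b, c; split => //; lia.
- move=> /IH [a [b [c [? ? ? ? ?]]]]; exists a, b, c; split => //; lia.
- move=> /IH [a [b [c [? ? ? ? ?]]]]; exists a, b, c; split => //; lia.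
Qed.

Lemma cntS (f : nat -> bool) lo hi : lo <= hi -> cnt f lo hi.+1 = cnt f lo hi + f hi.
Proof. by move=> H /=; rewrite H. Qed.

Definition validf (m l : nat) (f : nat -> bool) :=
  [/\ forall x, f x -> x + m + 2 <= l,
      forall c, c < l -> cnt f (c - m.+1) c.+1 <= 2 &
      forall x, 0 < x < l -> 0 < cnt f (x - m.+1) x].

Lemma cnt_gt0 (f : nat -> bool) lo hi x : lo <= x -> x < hi -> f x -> 0 < cnt f lo hi.
Proof. move=> H1 H2 H3. rewrite (@cnt_pt f lo hi x H1 H2 H3). lia. Qed.

Section PermSide.
Variables (m n : nat).

Definition pvalid (s : 'S_n) :=
  [forall i : 'I_n, ((s i)%:Z - (i : nat)%:Z)%R \in [:: (-2)%Z; (-1)%Z; (m : int)]].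

Definition fP (s : 'S_n) (x : nat) :=
  [exists i : 'I_n, (nat_of_ord i == x) && (nat_of_ord (s i) == i + m)].

Lemma disp s : pvalid s -> forall i : 'I_n, [\/ nat_of_ord (s i) = i + m, nat_of_ord (s i) + 1 = i | nat_of_ord (s i) + 2 = i].
Proof.
move=> /forallP H i. move: (H i). rewrite /=. set a := nat_of_ord (s i). set b := nat_of_ord i. rewrite !inE.
case/orP => [/eqP E|/orP [/eqP E|/eqP E]].
- constructor 3. lia.
- constructor 2. lia.
- constructor 1. lia.
Qed.

Arguments disp {s}.

Lemma fP_ord s (i : 'I_n) : fP s i = (nat_of_ord (s i) == i + m).
Proof.
apply/existsP/idP => [[j /andP [/eqP Hj /eqP E]]|E].
  have -> : i = j by apply: val_inj.
  by rewrite E Hj.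
by exists i; rewrite eqxx.
Qed.

Lemma fP_ex s x : fP s x -> exists i : 'I_n, nat_of_ord i = x /\ nat_of_ord (s i) = i + m.
Proof. by case/existsP => i /andP [/eqP H1 /eqP H2]; exists i. Qed.

Arguments fP_ex {s x}.

Lemma cut (s : 'S_n) t :
  #|[set i : 'I_n | (i < t) && (t <= s i)]| = #|[set i : 'I_n | (t <= i) && (s i < t)]|.
Proof.
set A := [set i : 'I_n | i < t]. set B := [set i : 'I_n | s i < t].
have AB : #|A| = #|B|.
  rewrite -(card_imset B (@perm_inj _ s)).
  suff -> : [set s x | x in B] = A by [].
  apply/setP => j; rewrite [in RHS]inE.
  apply/imsetP/idP => [[i]|Hj].
    by rewrite inE => Hi ->.
  exists (s^-1 j)%g; by rewrite ?inE permKV.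
have E1 : [set i : 'I_n | (i < t) && (t <= s i)] = A :\: B.
  by apply/setP => i; rewrite !inE -leqNgt andbC.
have E2 : [set i : 'I_n | (t <= i) && (s i < t)] = B :\: A.
  by apply/setP => i; rewrite !inE -leqNgt andbC.
rewrite E1 E2. have := cardsID B A. have := cardsID A B. rewrite setIC. lia.
Qed.

Lemma fw_elem s t (i : 'I_n) : pvalid s -> i < t <= s i -> nat_of_ord (s i) = i + m.
Proof. move=> Hs /andP [H1 H2]. case: (disp Hs i); lia. Qed.

Arguments fw_elem {s t i}.

Lemma validP s : pvalid s -> validf m n.+1 (fP s).
Proof.
move=> Hs. split.
- move=> x /fP_ex [i [<- E]]. have := ltn_ord (s i). lia.
- move=> c Hc. rewrite leqNgt. apply/negP => /cnt_ex3 [a [b [cc [Ha Hab Hbc Hc' [Fa Fb Fc]]]]].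
  case/fP_ex: Fa => ia [Via Sa]. case/fP_ex: Fb => ib [Vib Sb]. case/fP_ex: Fc => ic [Vic Sc].
  case: (leqP (cc - a) m) => Hca.
  +
    have : 1 < #|[set i : 'I_n | (i < cc) && (cc <= s i)]|.
      apply/card_gt1P; exists ia, ib; rewrite !inE; split.
      * apply/andP; split; lia.
      * apply/andP; split; lia.
      * apply/eqP => E. have : nat_of_ord ia = nat_of_ord ib by rewrite E. lia.
    rewrite cut => /card_gt1P [j1 [j2 [J1 J2 J12]]].
    move: J1 J2; rewrite !inE => /andP [J1 J1'] /andP [J2 J2'].
    have D1 := disp Hs j1. have D2 := disp Hs j2.
    have Hv : nat_of_ord j1 <> nat_of_ord j2 by move=> E; move/eqP: J12; apply; apply: val_inj.
    have Hj : nat_of_ord j1 = cc \/ nat_of_ord j2 = cc by case: D1; case: D2; lia.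
    case: Hj => Hj.
    * have Ej : j1 = ic by apply: val_inj => /=; lia.
      move: J1'; rewrite Ej. lia.
    * have Ej : j2 = ic by apply: val_inj => /=; lia.
      move: J2'; rewrite Ej. lia.
  + have Hca' : cc - a = m.+1 by lia.
    have Hbw : forall j : 'I_n, cc.+1 <= j -> s j < cc.+1 -> nat_of_ord (s j) = cc /\ (b = a.+1 -> False).
      move=> j J1 J2.
      have Hsj : nat_of_ord (s j) = cc.-1 \/ nat_of_ord (s j) = cc by case: (disp Hs j); lia.
      case: Hsj => Hsj.
        have : s j = s ia by apply: val_inj => /=; lia.
        move/perm_inj => E. move: J1. rewrite E. lia.
      split => // Hb.
      have : s j = s ib by apply: val_inj => /=; lia.
      move/perm_inj => E. move: J1. rewrite E. lia.
    have : 0 < #|[set i : 'I_n | (i < cc.+1) && (cc.+1 <= s i)]|.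
      apply/card_gt0P; exists ic; rewrite !inE. apply/andP; split; lia.
    rewrite cut => /card_gt0P [j]; rewrite inE => /andP [J1 J2].
    case: (Hbw j J1 J2) => _ Hb.
    have : 1 < #|[set i : 'I_n | (i < cc.+1) && (cc.+1 <= s i)]|.
      apply/card_gt1P; exists ib, ic; rewrite !inE; split.
      * apply/andP; split; lia.
      * apply/andP; split; lia.
      * apply/eqP => E. have : nat_of_ord ib = nat_of_ord ic by rewrite E. lia.
    rewrite cut => /card_gt1P [j1 [j2 [K1 K2 J12]]].
    move: K1 K2; rewrite !inE => /andP [K1 K1'] /andP [K2 K2'].
    case: (Hbw j1 K1 K1') => E1 _. case: (Hbw j2 K2 K2') => E2 _.
    have : s j1 = s j2 by apply: val_inj => /=; lia.
    move/perm_inj => E. by rewrite E eqxx in J12.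
- move=> x /andP [Hx0 Hxn]. rewrite lt0n. apply/negP => /eqP H0.
  have Hfw : forall i : 'I_n, i < x <= s i -> False.
    move=> i Hi. have E := fw_elem Hs Hi.
    have : 0 < cnt (fP s) (x - m.+1) x.
      apply: (@cnt_gt0 _ _ _ i); try lia. by rewrite fP_ord E eqxx.
    by rewrite H0.
  have Hv : x.-1 < n by lia.
  set v : 'I_n := Ordinal Hv.
  set j := (s^-1 v)%g.
  have Sj : s j = v by rewrite /j permKV.
  case: (leqP x j) => Hj.
  + have : 0 < #|[set i : 'I_n | (x <= i) && (s i < x)]|.
      apply/card_gt0P; exists j; rewrite inE Sj /=. apply/andP; split; lia.
    rewrite -cut => /card_gt0P [i]; rewrite inE. exact: Hfw.
  + case: (disp Hs j); rewrite Sj /= => E; try lia.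
    have : 0 < cnt (fP s) (x - m.+1) x.
      apply: (@cnt_gt0 _ _ _ j); try lia. by rewrite fP_ord Sj /= E eqxx.
    by rewrite H0.
Qed.


Lemma back_contra s t (j : 'I_n) : pvalid s -> pvalid t -> (forall x, fP s x = fP t x) ->
  (forall j' : 'I_n, j' < j -> s j' = t j') ->
  nat_of_ord (s j) + 2 = j -> nat_of_ord (t j) + 1 = j -> False.
Proof.
move=> Hs Ht HF Hlt E1 E2.
set j' := (t^-1 (s j))%g.
have Tj : t j' = s j by rewrite /j' permKV.
case: (ltngtP j' j) => H.
- have := Hlt _ H. rewrite Tj => /perm_inj E. move: H; rewrite E; lia.
- case: (disp Ht j'); rewrite Tj; lia.
- have E : j' = j by apply: val_inj.
  move: Tj; rewrite E => Tj. have : nat_of_ord (t j) = s j by rewrite Tj. lia.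
Qed.

Lemma pinj s t : pvalid s -> pvalid t -> (forall x, fP s x = fP t x) -> s = t.
Proof.
move=> Hs Ht HF.
suff H : forall k (j : 'I_n), j < k -> s j = t j.
  apply/permP => j. exact: (H j.+1).
elim => [|k IH] j Hj //.
case: (ltnP j k) => Hjk; first exact: IH.
have Hlt : forall j' : 'I_n, j' < j -> s j' = t j' by move=> j' H'; apply: IH; lia.
have Fj := HF j. rewrite !fP_ord in Fj.
have F1 : nat_of_ord (s j) = j + m -> nat_of_ord (t j) = j + m.
  by move/eqP; rewrite Fj => /eqP.
have F2 : nat_of_ord (t j) = j + m -> nat_of_ord (s j) = j + m.
  by move/eqP; rewrite -Fj => /eqP.
apply: val_inj => /=.
case: (disp Hs j) => Es; case: (disp Ht j) => Et; try lia.
- exfalso; apply: (@back_contra t s j Ht Hs (fun x => esym (HF x)) (fun j' H => esym (Hlt j' H))); lia.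
- exfalso; apply: (@back_contra s t j Hs Ht HF Hlt); lia.
Qed.

Section Construct.
Variable f : nat -> bool.
Hypothesis Hn : 0 < n.
Hypothesis Hf : validf m n.+1 f.

Lemma V1 x : f x -> x + m + 2 <= n.+1.
Proof. by case: Hf => H _ _; apply: H. Qed.

Arguments V1 {x}.

Lemma cellw lo hi : hi <= lo + m + 2 -> hi <= n.+1 -> cnt f lo hi <= 2.
Proof.
move=> H1 H2. case: hi H1 H2 => [|h] H1 H2; first by rewrite cnt0.
case: Hf => _ H _. apply: (@leq_trans (cnt f (h - m.+1) h.+1)); last by apply: H; lia.
apply: cnt_mono; lia.
Qed.

Lemma pointw lo hi x : 0 < x -> x <= n -> lo <= x - m.+1 -> x <= hi -> 0 < cnt f lo hi.
Proof.
move=> H1 H2 H3 H4. case: Hf => _ _ H. apply: (@leq_trans (cnt f (x - m.+1) x)); first by apply: H; lia.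
apply: cnt_mono; lia.
Qed.

Lemma f0 : f 0.
Proof.
have := @pointw 0 1 1 (ltn0Sn _) Hn (leq0n _) (leqnn _). by rewrite cnt1; case: (f 0).
Qed.

Definition g (i : nat) := if f i then i + m else if cnt f (i - m.+1) i == 2 then i - 2 else i - 1.

Lemma g_lt i : i < n -> g i < n.
Proof.
rewrite /g. case Fi: (f i) => H. have := V1 Fi. lia.
case: (_ == 2); lia.
Qed.

Lemma ge1 i : f i = false -> 1 <= i.
Proof. move=> Fi. case: i Fi => [|i] //. by rewrite f0. Qed.

Arguments ge1 {i}.

Lemma ge2 i : cnt f (i - m.+1) i = 2 -> 2 <= i.
Proof. move=> H. have := cnt_le f (i - m.+1) i. lia. Qed.

Arguments ge2 {i}.

Lemma fb i j : f i -> f j = false -> j < n -> g i = g j -> False.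
Proof.
move=> Fi Fj Hj. rewrite /g Fi Fj.
case: eqP => C E.
- have H2 := ge2 C. have Ej : j = i + m + 2 by lia. subst j.
  move: C. have -> : i + m + 2 - m.+1 = i.+1 by lia. move=> C.
  have := @cellw (i) (i+m+2) (leqnn _) ltac:(lia).
  rewrite (@cnt_pt f i (i+m+2) i) // ?C ?(cnt0 _ (leqnn _)); lia.
- have H1 := ge1 Fj. have Ej : j = i + m + 1 by lia. subst j.
  move: C. have -> : i + m + 1 - m.+1 = i by lia. move=> C.
  have := @cellw (i) (i+m+1) ltac:(lia) ltac:(lia).
  have := @pointw i.+1 (i + m + 2) (i + m + 2) ltac:(lia) ltac:(lia) ltac:(lia) (leqnn _).
  have -> : i + m + 2 = (i + m + 1).+1 by lia.
  rewrite cntS ?Fj; last lia.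
  rewrite addn0. move: C.
  rewrite (@cnt_pt f i (i+m+1) i) // ?(@cnt0 f i i (leqnn _)); lia.
Qed.

Arguments fb {i j}.

Lemma bb i : f i = false -> f i.+1 = false -> i.+1 < n ->
  cnt f (i - m.+1) i <> 2 -> cnt f (i.+1 - m.+1) i.+1 = 2 -> False.
Proof.
move=> Fi Fj Hj C1 C2. move: C2. rewrite cntS ?Fi; last lia.
have -> : i.+1 - m.+1 = i - m by lia.
have := @cnt_mono f (i - m) (i - m.+1) i i ltac:(lia) (leqnn _).
have := @cellw (i - m.+1) (i) ltac:(lia) ltac:(lia).
lia.
Qed.

Arguments bb {i}.

Lemma g_inj i j : i < n -> j < n -> g i = g j -> i = j.
Proof.
move=> Hi Hj E.
case Fi: (f i); case Fj: (f j).
- move: E; rewrite /g Fi Fj; lia.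
- by case: (fb Fi Fj Hj E).
- by case: (fb Fj Fi Hi (esym E)).
have Gi := ge1 Fi. have Gj := ge1 Fj.
move: E; rewrite /g Fi Fj.
case: eqP => Ci; case: eqP => Cj E.
- have := ge2 Ci; have := ge2 Cj; lia.
- have G := ge2 Ci. have Ei : i = j.+1 by lia. subst i. by case: (bb Fj Fi Hi Cj Ci).
- have G := ge2 Cj. have Ej : j = i.+1 by lia. subst j. by case: (bb Fi Fj Hj Ci Cj).
- lia.
Qed.

Definition gs (i : 'I_n) : 'I_n := Ordinal (@g_lt i (ltn_ord i)).

Lemma gs_inj : injective gs.
Proof. move=> i j /(congr1 val) /= E. apply: val_inj. exact: (@g_inj i j (ltn_ord i) (ltn_ord j) E). Qed.

Definition sg : 'S_n := perm gs_inj.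

Lemma sg_val (i : 'I_n) : nat_of_ord (sg i) = g i.
Proof. by rewrite /sg permE. Qed.

Lemma sg_valid : pvalid sg.
Proof.
apply/forallP => i. rewrite sg_val /g.
case Fi: (f i).
  rewrite !inE; apply/orP; right; apply/orP; right; apply/eqP.
  set a := nat_of_ord i. lia.
have := ge1 Fi.
case: eqP => C.
  have := ge2 C. rewrite !inE => H H2. apply/orP; left; apply/eqP.
  set a := nat_of_ord i. lia.
rewrite !inE => H. apply/orP; right; apply/orP; left; apply/eqP.
set a := nat_of_ord i. lia.
Qed.

Lemma sg_fP x : fP sg x = f x.
Proof.
apply/idP/idP.
  case/fP_ex => i [<-]. rewrite sg_val /g.
  case Fi: (f i) => //. have := ge1 Fi. case: eqP; lia.
move=> Fx. have Hx : x < n by have := V1 Fx; lia.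
apply/existsP; exists (Ordinal Hx). rewrite /= eqxx /=. by rewrite sg_val /g /= Fx.
Qed.

End Construct.

End PermSide.

Lemma teeth_bar (m s j : nat) : (j \in teeth 1 (m+2) true s) = [&& s <= j, j <= s + (m+1).*2 & odd j == odd s].
Proof.
rewrite /teeth /ctype. apply/mapP/idP => [[k Hk ->]|H].
  move: Hk; rewrite mem_iota => Hk. apply/and3P; split; try lia; apply/eqP; lia.
exists ((j - s) %/ 2); last by move/and3P: H => [H1 H2 /eqP H3]; lia.
rewrite mem_iota; move/and3P: H => [H1 H2 /eqP H3]; lia.
Qed.

Lemma teeth_sq (m s j : nat) : (j \in teeth 1 (m+2) false s) = (j == s).
Proof. by rewrite /teeth /ctype /= inE addn0. Qed.

Lemma pair_eq (l : nat) (p q : bool * 'I_l) : p.1 = q.1 -> nat_of_ord p.2 = nat_of_ord q.2 -> p = q.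
Proof. by case: p q => [b s] [b' s'] /= -> /val_inj ->. Qed.

Section MetaSide.
Variables (m l : nat).
Hypothesis Hl : 1 < l.

Local Notation PT := (bool * 'I_(l.*2))%type.
Local Notation teethp p := (teeth 1 (m + 2) p.1 p.2).

Section Tiling.
Variable T : {set PT}.
Hypothesis HT : is_tiling 1 (m+2) l T.

Lemma tile_in p j : p \in T -> j \in teethp p -> j < l.*2.
Proof.
case/andP: HT => /forall_inP H _ Hp Hj. by move/allP: (H p Hp) => /(_ j Hj).
Qed.

Lemma tile_ex j : j < l.*2 -> exists2 p, p \in T & j \in teethp p.
Proof.
move=> Hj. case/andP: HT => _ /forallP /(_ (Ordinal Hj)) /cards1P [x Ex].
have : x \in [set p in T | j \in teethp p] by rewrite Ex set11.
by rewrite inE => /andP [H1 H2]; exists x.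
Qed.

Lemma tile_uniq p q j : p \in T -> q \in T -> j \in teethp p -> j \in teethp q -> p = q.
Proof.
move=> Hp Hq Hjp Hjq. have Hj := @tile_in p j Hp Hjp.
case/andP: HT => _ /forallP /(_ (Ordinal Hj)) /cards1P [x Ex].
have : p \in [set p in T | j \in teethp p] by rewrite inE Hp Hjp.
have : q \in [set p in T | j \in teethp p] by rewrite inE Hq Hjq.
by rewrite Ex !inE => /eqP -> /eqP ->.
Qed.

Lemma bar_range p : p \in T -> p.1 -> p.2 %/ 2 + m + 2 <= l.
Proof.
move=> Hp Hb. have := @tile_in p (p.2 + (m+1).*2) Hp.
case: p Hp Hb => [[] s] //= Hp _. rewrite teeth_bar leqnn /= => H.
have := H ltac:(apply/andP; split; [lia| apply/eqP; lia]). lia.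
Qed.

Lemma bar_cell p q c : p \in T -> q \in T -> p.1 -> q.1 -> odd p.2 = odd q.2 ->
  p.2 %/ 2 <= c <= p.2 %/ 2 + m + 1 -> q.2 %/ 2 <= c <= q.2 %/ 2 + m + 1 -> p = q.
Proof.
move=> Hp Hq Bp Bq Hodd Hc1 Hc2.
apply: (@tile_uniq p q (c.*2 + odd p.2) Hp Hq).
  case: p Hp Bp Hodd Hc1 => [[] s] //= _ _ Ho Hc. rewrite teeth_bar.
  apply/and3P; split; try lia; apply/eqP; lia.
case: q Hq Bq Hodd Hc2 => [[] s] //= _ _ Ho Hc. rewrite teeth_bar.
apply/and3P; split; try lia; apply/eqP; lia.
Qed.

End Tiling.

Lemma cut_bar (T : {set PT}) x : ~~ is_cut_point 1 (m+2) l T x ->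
  exists2 p, p \in T & p.1 && (p.2 %/ 2 < x <= p.2 %/ 2 + m + 1).
Proof.
move/forall_inPn => [p Hp]. rewrite negb_or => /andP [/allPn [j1 H1 N1] /allPn [j2 H2 N2]].
exists p => //. case: p Hp H1 H2 N1 N2 => [[] s] /= Hp.
  rewrite !teeth_bar => /and3P [? ? ?] /and3P [? ? ?] ? ?. lia.
rewrite !teeth_sq => /eqP -> /eqP -> A B. exfalso. lia.
Qed.

Lemma bar_nocut (T : {set PT}) x p : p \in T -> p.1 -> p.2 %/ 2 < x <= p.2 %/ 2 + m + 1 ->
  ~~ is_cut_point 1 (m+2) l T x.
Proof.
move=> Hp Bp Hx. apply/forall_inPn. exists p => //. rewrite negb_or. apply/andP; split; apply/allPn.
  exists (p.2 + (m+1).*2). case: p Hp Bp Hx => [[] s] //= _ _ Hx. rewrite teeth_bar.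
    apply/and3P; split; try lia; apply/eqP; lia.
  lia.
exists (nat_of_ord p.2). case: p Hp Bp Hx => [[] s] //= _ _ Hx. rewrite teeth_bar.
  apply/and3P; split; try lia; apply/eqP; lia.
lia.
Qed.


Definition fT (T : {set PT}) (c : nat) := [exists p in T, p.1 && (p.2 %/ 2 == c)].
Definition rT (T : {set PT}) := [exists p in T, p.1 && (nat_of_ord p.2 == 1)].

Lemma fT_ex (T : {set PT}) c : fT T c -> exists2 p, p \in T & p.1 /\ p.2 %/ 2 = c.
Proof. by case/exists_inP => p Hp /andP [H1 /eqP H2]; exists p. Qed.

Arguments fT_ex {T c}.

Lemma fT_in (T : {set PT}) (p : PT) : p \in T -> p.1 -> fT T (p.2 %/ 2).
Proof. move=> Hp Hb. apply/exists_inP; exists p => //. by rewrite Hb eqxx. Qed.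

Section OneMeta.
Variable T : {set PT}.
Hypothesis Hmeta : is_metatile 1 (m+2) l T.
Hypothesis Hmix : is_mixed l T.

Lemma HT : is_tiling 1 (m+2) l T.
Proof. by case/andP: Hmeta. Qed.

Lemma point x : 0 < x < l -> exists2 p, p \in T & p.1 && (p.2 %/ 2 < x <= p.2 %/ 2 + m + 1).
Proof.
move=> /andP [H0 Hx]. case/andP: Hmeta => _ /forallP /(_ (Ordinal Hx)) /implyP /(_ H0).
exact: cut_bar.
Qed.

Lemma validT : validf m l (fT T).
Proof.
split.
- move=> x /fT_ex [p Hp [Hb <-]]. exact: (@bar_range T HT p Hp Hb).
- move=> c Hc. rewrite leqNgt. apply/negP => /cnt_ex3 [a [b [cc [Ha Hab Hbc Hc' [Fa Fb Fc]]]]].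
  case/fT_ex: Fa => pa Hpa [Ba Ca]. case/fT_ex: Fb => pb Hpb [Bb Cb]. case/fT_ex: Fc => pc Hpc [Bc Cc].
  have key : forall p q, p \in T -> q \in T -> p.1 -> q.1 -> c - m.+1 <= p.2 %/ 2 <= c ->
     c - m.+1 <= q.2 %/ 2 <= c -> odd p.2 = odd q.2 -> p.2 %/ 2 = q.2 %/ 2.
    move=> p q Hp Hq Bp Bq H1 H2 Ho. rewrite (@bar_cell T HT p q c Hp Hq Bp Bq Ho) //.
    + clear -H1; lia.
    + clear -H2; lia.
  have Ra : c - m.+1 <= pa.2 %/ 2 <= c by rewrite Ca; clear -Ha Hab Hbc Hc'; lia.
  have Rb : c - m.+1 <= pb.2 %/ 2 <= c by rewrite Cb; clear -Ha Hab Hbc Hc'; lia.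
  have Rc : c - m.+1 <= pc.2 %/ 2 <= c by rewrite Cc; clear -Ha Hab Hbc Hc'; lia.
  have PH : [\/ odd pa.2 = odd pb.2, odd pa.2 = odd pc.2 | odd pb.2 = odd pc.2].
    case: (odd pa.2); case: (odd pb.2); case: (odd pc.2); first [by constructor 1 | by constructor 2 | by constructor 3].
  case: PH => H.
  + have := key pa pb Hpa Hpb Ba Bb Ra Rb H. rewrite Ca Cb. clear -Hab Hbc; lia.
  + have := key pa pc Hpa Hpc Ba Bc Ra Rc H. rewrite Ca Cc. clear -Hab Hbc; lia.
  + have := key pb pc Hpb Hpc Bb Bc Rb Rc H. rewrite Cb Cc. clear -Hab Hbc; lia.
- move=> x Hx. have [p Hp /andP [Bp Hpx]] := @point x Hx.
  apply: (@cnt_gt0 _ _ _ (p.2 %/ 2)); try (clear -Hpx; lia). exact: fT_in.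
Qed.

Lemma bar_cellN (s t : 'I_(l.*2)) : (true, s) \in T -> (true, t) \in T -> odd s = odd t ->
  s %/ 2 <= t %/ 2 + m + 1 -> t %/ 2 <= s %/ 2 + m + 1 -> s = t.
Proof.
move=> Hs Ht Ho H1 H2.
have := @bar_cell T HT (true, s) (true, t) (maxn (s %/ 2) (t %/ 2)) Hs Ht isT isT Ho.
move=> H. have {}H := H ltac:(clear -H1 H2; lia) ltac:(clear -H1 H2; lia).
by case: H.
Qed.

Lemma nodouble p q : p \in T -> q \in T -> p.1 -> q.1 -> p.2 %/ 2 = q.2 %/ 2 -> p = q.
Proof.
case: p => [[] s] //; case: q => [[] t] //= Hp Hq _ _ E.
case: (boolP (odd s == odd t)) => [/eqP Ho|Ho].
  apply: pair_eq => //=. clear -E Ho; lia.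
exfalso.
have cover : forall u : 'I_(l.*2), (true, u) \in T -> u %/ 2 <= s %/ 2 + m + 1 ->
    s %/ 2 <= u %/ 2 + m + 1 -> u %/ 2 = s %/ 2.
  move=> u Hu H1 H2.
  case: (boolP (odd u == odd s)) => [/eqP Hus|Hus].
    by rewrite (@bar_cellN u s Hu Hp Hus).
  have Hut : odd u = odd t by move: Ho Hus; case: (odd u); case: (odd s); case: (odd t).
  rewrite (@bar_cellN u t Hu Hq Hut) //; clear -E H1 H2; lia.
have bp := @bar_range T HT (true, s) Hp isT. simpl in bp.
have Hc0 : s %/ 2 = 0.
  case: (posnP (s %/ 2)) => // Hc.
  have [[[] u] Hr /andP [//= _ Hrx]] := @point (s %/ 2) ltac:(clear -Hc bp; lia).
  have := cover u Hr ltac:(clear -Hrx; lia) ltac:(clear -Hrx; lia). clear -Hrx; lia.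
have Hcl : s %/ 2 + m + 2 = l.
  case: (ltngtP (s %/ 2 + m + 2) l) => // H; last by clear -H bp; lia.
  have [[[] u] Hr /andP [//= _ Hrx]] := @point (s %/ 2 + m + 2) ltac:(clear -H; lia).
  have := cover u Hr ltac:(clear -Hrx; lia) ltac:(clear -Hrx; lia). clear -Hrx; lia.
case/andP: Hmix => /exists_inP [[[] w] Hsq //= _] _.
have Hw : w < l.*2 by [].
case: (boolP (odd w == odd s)) => [/eqP Hws|Hws].
  have := @tile_uniq T HT (false, w) (true, s) w Hsq Hp.
  rewrite /= teeth_sq eqxx teeth_bar => H.
  have : (false, w) = (true, s) by apply: H => //; apply/and3P; split; [clear -Hws Hc0; lia|clear -Hw Hcl Hc0 Hws; lia|apply/eqP; exact Hws].
  by [].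
have Hwt : odd w = odd t by move: Ho Hws; case: (odd w); case: (odd s); case: (odd t).
have := @tile_uniq T HT (false, w) (true, t) w Hsq Hq.
rewrite /= teeth_sq eqxx teeth_bar => H.
have : (false, w) = (true, t).
  apply: H => //; apply/and3P; split; [clear -Hwt Hc0 E; lia|clear -Hw Hcl Hc0 E Hwt; lia|apply/eqP; exact Hwt].
by [].
Qed.

Lemma alt d : forall s t : 'I_(l.*2), (true, s) \in T -> (true, t) \in T ->
  t %/ 2 = s %/ 2 + d.+1 -> odd (s + t) = odd (cnt (fT T) (s %/ 2) (t %/ 2)).
Proof.
elim/ltn_ind: d => d IH s t Hs Ht Ed.
have F1 : fT T (s %/ 2) := @fT_in T (true, s) Hs isT.
case: (posnP (cnt (fT T) (s %/ 2).+1 (t %/ 2))) => Hz.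
- rewrite (@cnt_pt _ (s %/ 2) (t %/ 2) (s %/ 2)) // ?Hz; last by clear -Ed; lia.
  rewrite cnt0 //= oddD.
  case: (boolP (odd s == odd t)) => [/eqP Ho|Ho]; last by move: Ho; case: (odd s); case: (odd t).
  exfalso.
  case: (leqP (t %/ 2) (s %/ 2 + m + 1)) => Hst.
    have := @bar_cellN s t Hs Ht Ho ltac:(clear -Ed; lia) Hst. move=> E. move: Ed; rewrite E. clear; lia.
  have bt := @bar_range T HT (true, t) Ht isT. simpl in bt.
  have [[[] u] Hu /andP [//= _ Hux]] := @point (s %/ 2 + m + 2) ltac:(clear -Hst bt; lia).
  have : 0 < cnt (fT T) (s %/ 2).+1 (t %/ 2).
    apply: (@cnt_gt0 _ _ _ (u %/ 2)); first (by clear -Hux; lia); first (by clear -Hux Hst; lia).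
    exact: (@fT_in T (true, u) Hu isT).
  by rewrite Hz.
- have [c3 [/andP [H31 H32] F3]] := @cnt_ex _ _ _ Hz.
  have [[[] u] Hu [//= _ Cu]] := fT_ex F3.
  have IH1 := IH (c3 - s %/ 2).-1 ltac:(clear -H31 H32 Ed; lia) s u Hs Hu ltac:(clear -H31 Cu; lia).
  have IH2 := IH (t %/ 2 - c3).-1 ltac:(clear -H31 H32 Ed; lia) u t Hu Ht ltac:(clear -H32 Cu; lia).
  rewrite (@cntD _ (s %/ 2) (u %/ 2) (t %/ 2)); try (clear -H31 H32 Cu; lia).
  move: IH1 IH2. rewrite !oddD.
  case: (odd s); case: (odd t); case: (odd u); case: (odd (cnt _ _ (u %/ 2))); case: (odd (cnt _ (u %/ 2) _)); by [].
Qed.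

Lemma rT_formula (s : 'I_(l.*2)) : (true, s) \in T -> odd s = rT T (+) odd (cnt (fT T) 0 (s %/ 2)).
Proof.
move=> Hs.
have [[[] s0] H0 /andP [//= _ H0x]] := @point 1 ltac:(clear -Hl; lia).
have Hr : rT T = odd s0.
  case: (boolP (nat_of_ord s0 == 1)) => [/eqP E1| N1].
    rewrite E1 /=. apply/exists_inP; exists (true, s0) => //=. by rewrite E1.
  have -> : odd s0 = false by clear -N1 H0x; lia.
  apply/negbTE/exists_inP => [[[[] w] Hw //= /eqP Ew]].
  have := @nodouble (true, w) (true, s0) Hw H0 isT isT ltac:(simpl; clear -Ew H0x; lia).
  case=> E. by move: N1; rewrite -E Ew.
case: (posnP (s %/ 2)) => Hc.
  have := @nodouble (true, s) (true, s0) Hs H0 isT isT ltac:(simpl; clear -Hc H0x; lia).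
  case=> E. by rewrite Hc /= addbF Hr E.
have := @alt (s %/ 2).-1 s0 s H0 Hs ltac:(clear -Hc H0x; lia).
have -> : s0 %/ 2 = 0 by clear -H0x; lia.
rewrite Hr oddD. case: (odd s0); case: (odd s); case: (odd (cnt _ _ _)); by [].
Qed.

End OneMeta.

Lemma bar_sub T1 T2 : is_metatile 1 (m+2) l T1 -> is_mixed l T1 ->
  is_metatile 1 (m+2) l T2 -> is_mixed l T2 ->
  rT T1 = rT T2 -> (forall c, fT T1 c = fT T2 c) ->
  forall s, (true, s) \in T1 -> (true, s) \in T2.
Proof.
move=> M1 X1 M2 X2 Er Ef s Hs.
have : fT T2 (s %/ 2) by rewrite -Ef; exact: (@fT_in T1 (true, s) Hs isT).
case/fT_ex => [[[] t] Ht [//= _ Et]].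
have R1 := @rT_formula T1 M1 X1 s Hs. have R2 := @rT_formula T2 M2 X2 t Ht.
have Ec : cnt (fT T1) 0 (s %/ 2) = cnt (fT T2) 0 (s %/ 2) by apply: cnt_ext => x _; exact: Ef.
move: R2. rewrite Et -Er -Ec -R1 => Ho.
have -> : s = t by apply: val_inj => /=; clear -Ho Et; lia.
exact: Ht.
Qed.

Lemma meta_sub T1 T2 : is_metatile 1 (m+2) l T1 -> is_mixed l T1 ->
  is_metatile 1 (m+2) l T2 -> is_mixed l T2 ->
  rT T1 = rT T2 -> (forall c, fT T1 c = fT T2 c) ->
  forall p, p \in T1 -> p \in T2.
Proof.
move=> M1 X1 M2 X2 Er Ef [[] s] Hp; first exact: (@bar_sub T1 T2 M1 X1 M2 X2 Er Ef s Hp).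
have [[[] t] Ht Hst] := @tile_ex T2 (@HT T2 M2) s (ltn_ord s).
  have Ht1 := @bar_sub T2 T1 M2 X2 M1 X1 (esym Er) (fun c => esym (Ef c)) t Ht.
  have := @tile_uniq T1 (@HT T1 M1) (false, s) (true, t) s Hp Ht1.
  by rewrite /= teeth_sq eqxx => /(_ isT Hst).
move: Hst; rewrite /= teeth_sq => /eqP E.
have -> : s = t by apply: val_inj.
exact: Ht.
Qed.

Lemma meta_inj T1 T2 : is_metatile 1 (m+2) l T1 -> is_mixed l T1 ->
  is_metatile 1 (m+2) l T2 -> is_mixed l T2 ->
  rT T1 = rT T2 -> (forall c, fT T1 c = fT T2 c) -> T1 = T2.
Proof.
move=> M1 X1 M2 X2 Er Ef. apply/setP => p. apply/idP/idP.
  exact: meta_sub.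
apply: meta_sub => //.
Qed.


End MetaSide.

Section Build.
Variables (m l : nat).
Hypothesis Hl : 1 < l.
Variable r : bool.
Variable f : nat -> bool.
Hypothesis Hf : validf m l f.

Local Notation PT := (bool * 'I_(l.*2))%type.

Lemma fV1 x : f x -> x + m + 2 <= l.
Proof. by case: Hf => H _ _; apply: H. Qed.

Lemma fcell lo hi : hi <= lo + m + 2 -> hi <= l -> cnt f lo hi <= 2.
Proof.
move=> H1 H2. case: hi H1 H2 => [|h] H1 H2; first by rewrite cnt0.
case: Hf => _ H _. apply: (@leq_trans (cnt f (h - m.+1) h.+1)); last by apply: H; lia.
apply: cnt_mono; lia.
Qed.

Lemma fpoint x : 0 < x < l -> exists c, [/\ x - m.+1 <= c, c < x & f c].
Proof.
move=> Hx. case: Hf => _ _ H. have [c [Hc Fc]] := @cnt_ex _ _ _ (H x Hx).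
exists c. split => //; lia.
Qed.

Lemma ff0 : f 0.
Proof. have [c [_ Hc Fc]] := @fpoint 1 ltac:(lia). have E : c = 0 by lia. by rewrite -E. Qed.

Definition barok (s : nat) := f (s %/ 2) && (odd s == r (+) odd (cnt f 0 (s %/ 2))).

Definition covered (j : nat) := [exists s : 'I_(l.*2), barok s && (j \in teeth 1 (m+2) true s)].

Definition Tc : {set PT} := [set p : PT | if p.1 then barok p.2 else ~~ covered p.2].

Lemma K1lt (s1 s2 j : nat) : barok s1 -> barok s2 -> j \in teeth 1 (m+2) true s1 ->
  j \in teeth 1 (m+2) true s2 -> s1 %/ 2 < s2 %/ 2 -> False.
Proof.
rewrite /barok !teeth_bar => /andP [F1 /eqP O1] /andP [F2 /eqP O2] /and3P [A1 B1 /eqP C1] /and3P [A2 B2 /eqP C2] H.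
have E : cnt f 0 (s2 %/ 2) = cnt f 0 (s1 %/ 2) + cnt f (s1 %/ 2) (s2 %/ 2) by apply: cntD; lia.
have G : 0 < cnt f (s1 %/ 2) (s2 %/ 2) by apply: (@cnt_gt0 _ _ _ (s1 %/ 2)) => //; lia.
have S : cnt f (s1 %/ 2) (s2 %/ 2).+1 = cnt f (s1 %/ 2) (s2 %/ 2) + f (s2 %/ 2) by apply: cntS; lia.
have L : cnt f (s1 %/ 2) (s2 %/ 2).+1 <= 2 by apply: fcell; have := @fV1 _ F2; lia.
move: S L. rewrite F2. move: O1 O2 E G.
set a := cnt f 0 (s1 %/ 2). set b := cnt f 0 (s2 %/ 2). set c := cnt f (s1 %/ 2) (s2 %/ 2).
move=> O1 O2 E G S L.
have : odd b = odd a.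
  move: O1 O2. rewrite -C1 -C2. case: (odd j); case: r; case: (odd a); case: (odd b); by [].
clear -E G S L. lia.
Qed.

Arguments K1lt {s1 s2 j}.

Lemma K1 (s1 s2 j : nat) : barok s1 -> barok s2 -> j \in teeth 1 (m+2) true s1 ->
  j \in teeth 1 (m+2) true s2 -> s1 = s2.
Proof.
move=> B1 B2 J1 J2.
case: (ltngtP (s1 %/ 2) (s2 %/ 2)) => H.
- by case: (K1lt B1 B2 J1 J2 H).
- by case: (K1lt B2 B1 J2 J1 H).
- move: J1 J2; rewrite !teeth_bar => /and3P [_ _ /eqP C1] /and3P [_ _ /eqP C2]. lia.
Qed.

Arguments K1 {s1 s2 j}.

Definition sl (c : nat) := c.*2 + (r (+) odd (cnt f 0 c)).

Lemma sl_lt c : f c -> sl c < l.*2.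
Proof. move=> Fc. have := @fV1 _ Fc. rewrite /sl. case: (_ (+) _) => /=; lia. Qed.

Arguments sl_lt {c}.

Lemma sl_half c : sl c %/ 2 = c.
Proof. rewrite /sl. case: (_ (+) _) => /=; lia. Qed.

Lemma sl_ok c : f c -> barok (sl c).
Proof.
move=> Fc. rewrite /barok sl_half Fc /=. rewrite /sl.
case: (_ (+) _) => /=; apply/eqP; lia.
Qed.

Arguments sl_ok {c}.

Definition slo c (Fc : f c) : 'I_(l.*2) := Ordinal (sl_lt Fc).

Arguments slo {c}.

Lemma slo_in c (Fc : f c) : (true, slo Fc) \in Tc.
Proof. by rewrite inE /= sl_ok. Qed.

Arguments slo_in {c}.

Lemma Tc_tiling : is_tiling 1 (m+2) l Tc.
Proof.
apply/andP; split.
  apply/forall_inP => [[b s]]; rewrite inE => H; apply/allP => j.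
  case: b H => /= H.
    rewrite teeth_bar => /and3P [H1 H2 _]. move: H => /andP [F _]. have := @fV1 _ F. lia.
  by rewrite teeth_sq => /eqP ->.
apply/forallP => j. apply/cards1P.
case: (boolP (covered j)) => [/existsP [s0 /andP [B0 J0]]|Nc].
  exists (true, s0). apply/setP => [[[] s]]; rewrite !inE /=.
    apply/idP/idP => [/andP [B J]|/eqP [->]]; last by rewrite B0 J0.
    apply/eqP; congr (_, _). apply: val_inj. exact: (K1 B B0 J J0).
  apply/negbTE. rewrite double0 addn0. apply/negP => /andP [Nc /eqP E].
  move/negP: Nc; apply. apply/existsP; exists s0. by rewrite B0 -E J0.
exists (false, j). apply/setP => [[[] s]]; rewrite !inE /=.
  apply/negbTE/negP => /andP [B J]. move/negP: Nc; apply. apply/existsP; exists s. by rewrite B J.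
rewrite double0 addn0. apply/idP/idP => [/andP [_ /eqP E]|/eqP [->]].
  apply/eqP; congr (_, _). by apply: val_inj.
by rewrite Nc eqxx.
Qed.

Lemma Tc_meta : is_metatile 1 (m+2) l Tc.
Proof.
rewrite /is_metatile Tc_tiling /=. apply/forallP => x. apply/implyP => Hx.
have [c [H1 H2 Fc]] := @fpoint x ltac:(have := ltn_ord x; lia).
apply: (@bar_nocut m l Hl Tc x (true, slo Fc) (slo_in Fc) isT).
rewrite /= sl_half. apply/andP; split; lia.
Qed.

Lemma Tc_mixed : is_mixed l Tc.
Proof.
have F0 := ff0.
apply/andP; split; apply/exists_inP.
  have Hj : (~~ r : nat) < l.*2 by case: r => /=; lia.
  exists (false, Ordinal Hj) => //. rewrite inE /=.
  apply/negP => /existsP [s /andP [/andP [Fs /eqP Os] J]].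
  move: J. rewrite teeth_bar => /and3P [A B /eqP C].
  have Hs : s %/ 2 = 0 by case: r A C => /=; lia.
  move: Os. rewrite Hs /= addbF -C. by case: r.
exists (true, slo F0); first exact: slo_in.
by [].
Qed.

Lemma Tc_r : rT l Tc = r.
Proof.
apply/exists_inP/idP => [[[[] s] Hs //= /eqP E]|Hr].
  move: Hs; rewrite inE /= /barok E /= => /andP [_ /eqP]. by case: r.
have Hj : 1 < l.*2 by lia.
exists (true, Ordinal Hj) => //. rewrite inE /= /barok /= ff0 /=. by rewrite Hr.
Qed.

Lemma Tc_f c : fT l Tc c = f c.
Proof.
apply/idP/idP.
  case/(@fT_ex l Tc c) => [[[] s] Hs [//= _ <-]]. by move: Hs; rewrite inE /= => /andP [].
move=> Fc. apply/exists_inP; exists (true, slo Fc); first exact: slo_in.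
by rewrite /= sl_half eqxx.
Qed.

End Build.

Lemma validf_ext m l (f g : nat -> bool) : f =1 g -> validf m l f -> validf m l g.
Proof.
move=> E [H1 H2 H3]. have Ec : forall lo hi, cnt f lo hi = cnt g lo hi.
  by move=> lo hi; apply: cnt_ext => x _; exact: E.
split.
- move=> x; rewrite -E; exact: H1.
- move=> c Hc; rewrite -Ec; exact: H2.
- move=> x Hx; rewrite -Ec; exact: H3.
Qed.

Definition fF {l : nat} (F : {set 'I_l}) (x : nat) := [exists i in F, nat_of_ord i == x].

Lemma fF_ord l (F : {set 'I_l}) (c : 'I_l) : fF F c = (c \in F).
Proof.
apply/exists_inP/idP => [[i Hi /eqP E]|H]; last by exists c.
by have -> : c = i by apply: val_inj.
Qed.

Lemma fF_lt l (F : {set 'I_l}) x : fF F x -> x < l.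
Proof. by case/exists_inP => i _ /eqP <-. Qed.

Lemma fT_lt l (T : {set bool * 'I_(l.*2)}) c : fT l T c -> c < l.
Proof. case/exists_inP => p _ /andP [_ /eqP <-]. have := ltn_ord p.2. lia. Qed.

Lemma fP_lt m n (s : 'S_n) x : fP m n s x -> x < n.
Proof. case/existsP => i /andP [/eqP <- _]. exact: ltn_ord. Qed.

Section Main.
Variables (m L : nat).
Local Notation l := L.+2.
Local Notation n := L.+1.
Local Notation PT := (bool * 'I_(l.*2))%type.

Definition Meta := [set T : {set PT} | is_metatile 1 (m+2) l T && is_mixed l T].
Definition psi (T : {set PT}) := (rT l T, [set c : 'I_l | fT l T c]).
Definition Perms := [set s : 'S_n | pvalid m n s].
Definition phi (s : 'S_n) := [set c : 'I_l | fP m n s c].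

Lemma Hl : 1 < l. Proof. by []. Qed.

Lemma fF_psi T : fF [set c : 'I_l | fT l T c] =1 fT l T.
Proof.
move=> x. case: (ltnP x l) => Hx.
  by rewrite -[x]/(nat_of_ord (Ordinal Hx)) fF_ord inE.
apply/idP/idP => H; [have := @fF_lt _ _ _ H | have := @fT_lt _ _ _ H]; lia.
Qed.

Lemma fF_phi s : fF (phi s) =1 fP m n s.
Proof.
move=> x. case: (ltnP x l) => Hx.
  by rewrite -[x]/(nat_of_ord (Ordinal Hx)) fF_ord inE.
apply/idP/idP => H; [have := @fF_lt _ _ _ H | have := @fP_lt _ _ _ _ H]; lia.
Qed.

Lemma psi_inj : {in Meta &, injective psi}.
Proof.
move=> T1 T2; rewrite !inE => /andP [M1 X1] /andP [M2 X2] [Er Ef].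
apply: (@meta_inj m l Hl T1 T2 M1 X1 M2 X2 Er) => c.
by rewrite -!fF_psi Ef.
Qed.

Lemma phi_inj : {in Perms &, injective phi}.
Proof.
move=> s t; rewrite !inE => Hs Ht E.
apply: (@pinj m n s t Hs Ht) => x. by rewrite -!fF_phi E.
Qed.

Lemma set_ext (F : {set 'I_l}) : [set c : 'I_l | fF F c] = F.
Proof. by apply/setP => c; rewrite inE fF_ord. Qed.

Lemma psi_img b F : ((b, F) \in psi @: Meta) <-> validf m l (fF F).
Proof.
split => [/imsetP [T]|V].
  rewrite inE => /andP [M X] [_ ->].
  apply: (@validf_ext m l (fT l T)); first by move=> x; rewrite fF_psi.
  exact: (@validT m l Hl T M).
apply/imsetP; exists (Tc m l b (fF F)).
  by rewrite inE (@Tc_meta m l Hl b (fF F) V) (@Tc_mixed m l Hl b (fF F) V).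
rewrite /psi (@Tc_r m l Hl b (fF F) V). congr (_, _).
rewrite -[in LHS](set_ext F). apply/setP => c; rewrite !inE (@Tc_f m l Hl b (fF F)) //.
Qed.

Lemma phi_img F : (F \in phi @: Perms) <-> validf m l (fF F).
Proof.
split => [/imsetP [s]|V].
  rewrite inE => Hs ->.
  apply: (@validf_ext m l (fP m n s)); first by move=> x; rewrite fF_phi.
  exact: (@validP m n s Hs).
apply/imsetP; exists (sg m n (fF F) (ltn0Sn L) V).
  rewrite inE. exact: (@sg_valid m n (fF F) (ltn0Sn L) V).
rewrite -[LHS](set_ext F). apply/setP => c; rewrite !inE (@sg_fP m n (fF F) (ltn0Sn L) V) //.
Qed.

Lemma main : mu 1 (m + 2) l = 2 * P [:: (-2)%Z; (-1)%Z; (m : int)] (l - 1).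
Proof.
have E1 : mu 1 (m+2) l = #|psi @: Meta| by rewrite (card_in_imset psi_inj).
have E2 : P [:: (-2)%Z; (-1)%Z; (m : int)] (l - 1) = #|phi @: Perms|.
  by rewrite (card_in_imset phi_inj).
have E3 : psi @: Meta = setX [set: bool] (phi @: Perms).
  apply/setP => [[b F]]. rewrite !inE /=. apply/idP/idP.
    by move/psi_img => V; apply/phi_img.
  by move/phi_img => V; apply/psi_img.
by rewrite E1 E2 E3 cardsX cardsT card_bool.
Qed.

End Main.


Theorem theorem3 (m l : nat) : 1 < l ->
  mu 1 (m + 2) l = 2 * P [:: (-2)%Z; (-1)%Z; (m : int)] (l - 1).
Proof.
case: l => [|[|L]] // _. exact: (main m L).
Qed.
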